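(* There is a constant $\Delta_2>0$ (depending only on $r$) such that for every $\eta>0$ there is $\varepsilon_5=\varepsilon_5(\eta)>0$ with the following property: for all large enough $n$, every $m<\varepsilon_5 n$, every $U\subset V_n$ with $|U|=m$ and every $u\in(\eta,r]$ (with $\mathbb P(e(U,U^c)=u|U|)>0$), (i) $\mathbb P\big(|\partial U|\le(u-\eta)|U|\ \big|\ e(U,U^c)=u|U|\big)\le\exp(-\eta m\log(n/m)+\Delta_2 m)$; (ii) $\mathbb P\big(e(U,U^c)-|\partial U|>\eta|U|\big)\le\exp(-\eta m\log(n/m)+\Delta_2 m)$.
   Context: Fix an integer $r\ge3$, let $V_n=\{1,\dots,n\}$ with $rn$ even, and let $\mathbb P$ be the law of the random multigraph $G_n$ on $V_n$ obtained by giving each vertex $r$ half-edges and pairing all $rn$ half-edges uniformly at random. Write $y\sim x$ if $y$ and $x$ are joined by an edge of $G_n$. For $U\subset V_n$: $e(U,U^c)$ is the number of edges (pairs of matched half-edges) with one endpoint in $U$ and the other in $U^c$, and $\partial U:=\{y\in U^c: y\sim x\text{ for some }x\in U\}$. *)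

(* Defs.v *)
From mathcomp Require Import all_boot all_order all_fingroup all_algebra.
From mathcomp Require Import reals sequences exp.
Set Implicit Arguments. Unset Strict Implicit. Unset Printing Implicit Defensive.
Import Order.TTheory GRing.Theory Num.Theory.
Local Open Scope ring_scope.

(* Half-edges of the configuration model on V_n = 'I_n (vertices 0..n-1,
   standing for 1..n): vertex v carries the r half-edges (v, j), j < r. *)
Definition half (n r : nat) : finType := ('I_n * 'I_r)%type.

Definition is_pairing (n r : nat) (p : {perm half n r}) : bool :=
  [forall x, (p (p x) == x) && (p x != x)].

Definition pairings (n r : nat) : {set {perm half n r}} :=
  [set p | is_pairing p].

Definition prob (R : realType) (n r : nat) (E : pred {perm half n r}) : R :=
  #|[set p in pairings n r | E p]|%:R / #|pairings n r|%:R.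

Definition cprob (R : realType) (n r : nat) (E F : pred {perm half n r}) : R :=
  #|[set p in pairings n r | E p && F p]|%:R /
  #|[set p in pairings n r | F p]|%:R.

(* e(U,U^c): number of edges with one endpoint in U and the other outside U;
   each such edge is counted once via its half-edge lying at a vertex of U. *)
Definition eout (n r : nat) (p : {perm half n r}) (U : {set 'I_n}) : nat :=
  #|[set x : half n r | (x.1 \in U) && ((p x).1 \notin U)]|.

Definition bdry (n r : nat) (p : {perm half n r}) (U : {set 'I_n}) : {set 'I_n} :=
  [set y | (y \notin U) &&
           [exists x : half n r, (x.1 \in U) && ((p x).1 == y)]].

(* Main.v *)
From Pilot Require Import Defs.
From mathcomp Require Import all_boot all_order all_fingroup all_algebra.
From mathcomp Require Import reals sequences exp.
From mathcomp Require Import zify ring lra.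
Import Pilot.Defs.
Import Order.TTheory GRing.Theory Num.Theory.
Set Implicit Arguments. Unset Strict Implicit. Unset Printing Implicit Defensive.

Definition Hout (n r : nat) (U : {set 'I_n}) : {set half n r} := [set x | x.1 \notin U].
Definition Zs (n r : nat) (p : {perm half n r}) (U : {set 'I_n}) : {set half n r} :=
  [set y | (y.1 \notin U) && ((p y).1 \in U)].
Definition vert (n r : nat) (W : {set half n r}) : {set 'I_n} := [set y.1 | y in W].
Definition fib (n r : nat) (U : {set 'I_n}) (W : {set half n r}) :=
  [set p in pairings n r | Zs p U == W].

Lemma pairingP n r (p : {perm half n r}) : p \in pairings n r ->
  (forall x, p (p x) = x) /\ (forall x, p x != x).
Proof.
rewrite inE => /forallP H; split => x; by case/andP: (H x) => /eqP.
Qed.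

Lemma eout_Z n r (p : {perm half n r}) U : p \in pairings n r ->
  eout p U = #|Zs p U|.
Proof.
move=> /pairingP [inv _]; rewrite /eout.
have -> : Zs p U = p @: [set x : half n r | (x.1 \in U) && ((p x).1 \notin U)].
  apply/setP => y; apply/idP/imsetP.
    rewrite inE => /andP [yU pyU]; exists (p y); last by rewrite inv.
    by rewrite inE inv pyU yU.
  by case=> x; rewrite !inE => /andP [xU pxU] ->; rewrite inv pxU xU.
by rewrite card_imset //; exact: perm_inj.
Qed.

Lemma bdry_Z n r (p : {perm half n r}) U : p \in pairings n r ->
  bdry p U = vert (Zs p U).
Proof.
move=> /pairingP [inv _]; apply/setP => y; rewrite !inE.
apply/andP/imsetP.
  case=> yU /existsP [x /andP [xU /eqP pxy]].
  exists (p x); last by rewrite pxy.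
  by rewrite inE pxy yU inv.
case=> z; rewrite inE => /andP [zU pzU] ->; split => //.
by apply/existsP; exists (p z); rewrite pzU inv eqxx.
Qed.

Lemma Zs_sub n r (p : {perm half n r}) U : Zs p U \subset Hout r U.
Proof. by apply/subsetP => y; rewrite !inE => /andP []. Qed.

Lemma permJE (T : finType) (p s : {perm T}) x : (p ^ s)%g x = s (p ((s^-1)%g x)).
Proof. by rewrite -{1}(permKV s x) permJ. Qed.

Lemma pairing_conj n r (p s : {perm half n r}) : p \in pairings n r ->
  (p ^ s)%g \in pairings n r.
Proof.
move=> /pairingP [inv fp]; rewrite inE; apply/forallP => x; rewrite !permJE.
rewrite permK inv permKV eqxx /=.
by rewrite -(inj_eq (@perm_inj _ (s^-1)%g)) permK.
Qed.

Lemma Zs_conj n r (p s : {perm half n r}) (U : {set 'I_n}) :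
  (forall x, ((s x).1 \in U) = (x.1 \in U)) ->
  Zs (p ^ s)%g U = s @: Zs p U.
Proof.
move=> Hs; apply/setP => y.
rewrite -{2}(permKV s y) mem_imset; last exact: perm_inj.
rewrite !inE permJE Hs.
by rewrite -{1}(permKV s y) Hs.
Qed.

Lemma tperm_good n r (U : {set 'I_n}) (a b : half n r) :
  a \in Hout r U -> b \in Hout r U ->
  forall x, ((tperm a b x).1 \in U) = (x.1 \in U).
Proof.
rewrite !inE => /negbTE aU /negbTE bU x.
by case: tpermP => [->|->|]; rewrite ?aU ?bU.
Qed.

Lemma mem_tperm_set (T : finType) (a b y : T) (W : {set T}) :
  (y \in tperm a b @: W) = (tperm a b y \in W).
Proof. by rewrite -{1}(tpermK a b y) mem_imset //; exact: perm_inj. Qed.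

Lemma tperm_setK (T : finType) (a b : T) (W : {set T}) :
  tperm a b @: (tperm a b @: W) = W.
Proof. by apply/setP => y; rewrite !mem_tperm_set tpermK. Qed.

Lemma fib_le n r (U : {set 'I_n}) (a b : half n r) W :
  a \in Hout r U -> b \in Hout r U ->
  #|fib U W| <= #|fib U (tperm a b @: W)|.
Proof.
move=> aH bH.
rewrite -(card_imset (fib U W) (conjg_inj (tperm a b))).
apply: subset_leq_card; apply/subsetP => q /imsetP [p].
rewrite inE => /andP [pP /eqP ZW] ->.
rewrite inE pairing_conj //= Zs_conj ?ZW //.
exact: tperm_good.
Qed.

Lemma fib_eq n r (U : {set 'I_n}) (a b : half n r) W :
  a \in Hout r U -> b \in Hout r U ->
  #|fib U W| = #|fib U (tperm a b @: W)|.
Proof.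
move=> aH bH; apply/eqP; rewrite eqn_leq fib_le //=.
by rewrite -{2}(tperm_setK a b W) fib_le.
Qed.

Lemma fib_const n r (U : {set 'I_n}) d : forall (W W' : {set half n r}),
  W \subset Hout r U -> W' \subset Hout r U -> #|W| = #|W'| ->
  #|W :\: W'| = d -> #|fib U W| = #|fib U W'|.
Proof.
elim: d => [|d IH] W W' sW sW' cW dW.
  have -> : W = W'; last by [].
  apply/eqP; rewrite eqEcard cW leqnn andbT.
  by rewrite -setD_eq0 -cards_eq0 dW.
have : 0 < #|W :\: W'| by rewrite dW.
rewrite card_gt0 => /set0Pn [a]; rewrite inE => /andP [aW' aW].
have cd : #|W' :\: W| = #|W :\: W'|.
  apply/eqP; rewrite -(eqn_add2l #|W :&: W'|) cardsID setIC cardsID cW //.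
have : 0 < #|W' :\: W| by rewrite cd dW.
rewrite card_gt0 => /set0Pn [b]; rewrite inE => /andP [bW bW'].
have aH : a \in Hout r U by apply: (subsetP sW).
have bH : b \in Hout r U by apply: (subsetP sW').
rewrite (fib_eq W aH bH); apply: IH => //.
- apply/subsetP => y; rewrite mem_tperm_set.
  by case: tpermP => [->|->|] // _ _ /(subsetP sW).
- by rewrite card_imset //; exact: perm_inj.
- have -> : tperm a b @: W :\: W' = (W :\: W') :\ a.
    apply/setP => y; rewrite !inE mem_tperm_set.
    case: tpermP => [->|->|].
    + by rewrite eqxx (negbTE bW) andbF.
    + by rewrite bW' (negbTE bW) !andbF.
    + by move=> ya _; have -> : (y != a) by apply/eqP.
  by move: dW; rewrite (cardsD1 a (W :\: W')) inE aW' aW add1n => -[].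
Qed.

Definition Bk n r (U : {set 'I_n}) (k : nat) (G : pred nat) : {set {perm half n r}} :=
  [set p in pairings n r | (#|Zs p U| == k) && G #|vert (Zs p U)|].
Definition BadW n r (U : {set 'I_n}) (k : nat) (G : pred nat) : {set {set half n r}} :=
  [set W : {set half n r} | (W \subset Hout r U) && (#|W| == k) && G #|vert W|].

Lemma card_Bk n r (U : {set 'I_n}) k G :
  #|Bk r U k G| = \sum_(W in BadW r U k G) #|fib U W|.
Proof.
rewrite -sum1_card (partition_big (fun p => Zs p U) (mem (BadW r U k G))).
  apply: eq_bigr => W WB; rewrite sum1dep_card; apply: eq_card => p.
  rewrite /fib /Bk !inE; case: (Zs p U =P W) => [ZW|_]; last by rewrite !andbF.
  have WB' : W \in BadW r U k G := WB.
  move: WB'; rewrite inE -ZW Zs_sub /= => /andP [H1 H2].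
  by rewrite H1 H2 !andbT.
move=> p; rewrite inE => /andP [_ H]; change (Zs p U \in BadW r U k G).
by rewrite inE Zs_sub.
Qed.

Lemma core n r (U : {set 'I_n}) k : exists c, forall G,
  #|Bk r U k G| = c * #|BadW r U k G|.
Proof.
case: (boolP [exists W, W \in BadW r U k predT]) => [/existsP [W0 W0B]|none].
  exists #|fib U W0| => G; rewrite card_Bk mulnC -sum_nat_const.
  apply: eq_bigr => W; rewrite !inE => /andP [/andP [sW cW] _].
  move: W0B; rewrite !inE andbT => /andP [sW0 cW0].
  apply: (fib_const (d := #|W :\: W0|)) => //.
  by rewrite (eqP cW) (eqP cW0).
exists 0 => G; rewrite card_Bk mul0n big1 // => W; rewrite !inE => /andP [H _].
by move: none; rewrite negb_exists => /forallP /(_ W); rewrite !inE H.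
Qed.

Lemma card_Hout n r (U : {set 'I_n}) : #|Hout r U| = (n - #|U|) * r.
Proof.
have -> : Hout r U = setX (~: U) [set: 'I_r].
  by apply/setP => x; rewrite !inE andbT.
rewrite cardsX cardsT card_ord; congr (_ * _).
by rewrite (cardsCs (~: U)) setCK card_ord.
Qed.

Lemma card_All n r (U : {set 'I_n}) k :
  #|BadW r U k predT| = 'C((n - #|U|) * r, k).
Proof.
rewrite -card_Hout -cards_draws; apply: eq_card => W; rewrite !inE andbT //.
Qed.

Lemma card_Bad n r (U : {set 'I_n}) k G :
  #|BadW r U k G| <= \sum_(j < k.+1 | G j) 'C(n, j) * 2 ^ (j * r).
Proof.
rewrite -sum1_card (partition_big (fun W => vert W)
   (fun V : {set 'I_n} => (#|V| < k.+1) && G #|V|)); last first.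
  move=> W; rewrite inE => /andP [/andP [_ /eqP cW] GW]; rewrite GW andbT.
  by rewrite ltnS -cW leq_imset_card.
apply: (@leq_trans (\sum_(V : {set 'I_n} | (#|V| < k.+1) && G #|V|) 2 ^ (#|V| * r))).
  apply: leq_sum => V _; rewrite sum1dep_card.
  apply: (@leq_trans #|powerset (setX V [set: 'I_r])|); last first.
    by rewrite card_powerset cardsX cardsT card_ord.
  apply: subset_leq_card; apply/subsetP => W; rewrite !inE => /andP [_ /eqP <-].
  apply/subsetP => y yW; rewrite !inE andbT; apply/imsetP; by exists y.
rewrite (partition_big (fun V : {set 'I_n} => (inord #|V| : 'I_k.+1)) (fun j => G j)); last first.
  by move=> V /andP [Vk GV]; rewrite inordK.
apply: leq_sum => j Gj.
apply: (@leq_trans (\sum_(V in [set V : {set 'I_n} | #|V| == j]) 2 ^ (j * r))); last first.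
  by rewrite sum_nat_const card_draws card_ord.
rewrite [X in X <= _]big_mkcond [X in _ <= X]big_mkcond /=; apply: leq_sum => V _.
case: ifP => // /andP [/andP [Vk _] /eqP Vj].
by rewrite inE -Vj inordK // eqxx.
Qed.

Lemma eout_le n r (p : {perm half n r}) U : eout p U <= #|U| * r.
Proof.
apply: (@leq_trans #|setX U [set: 'I_r]|); last by rewrite cardsX cardsT card_ord.
by apply: subset_leq_card; apply/subsetP => x; rewrite !inE => /andP [-> _]; case: x.
Qed.

Lemma ffact_le_exp n j : n ^_ j <= n ^ j.
Proof.
elim: j => [|j IH]; first by rewrite ffactn0.
by rewrite ffactnSr expnSr leq_mul // leq_subr.
Qed.

Lemma ffact_ge k : forall N, k <= N -> (N - k).+1 ^ k <= N ^_ k.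
Proof.
elim: k => [|k IH] [|N] //= kN.
rewrite ffactSS expnS subSS; apply: leq_mul; first by rewrite ltnS leq_subr.
exact: IH.
Qed.

Lemma expn_leq m n e : m <= n -> m ^ e <= n ^ e.
Proof. by move=> mn; elim: e => // e IH; rewrite !expnS leq_mul. Qed.

Lemma fact_le j d : (j + d)`! <= j`! * (j + d) ^ d.
Proof.
elim: d => [|d IH]; first by rewrite addn0 muln1.
rewrite addnS factS expnS mulnCA; apply: leq_mul => //.
apply: (leq_trans IH); apply: leq_mul => //; exact: expn_leq.
Qed.

Lemma keyA n N j k : j <= k -> k <= N -> n <= 2 * (N - k).+1 ->
  'C(n, j) * n ^ (k - j) <= 2 ^ k * 'C(N, k) * k ^ (k - j).
Proof.
move=> jk kN nN.
rewrite -(leq_pmul2r (fact_gt0 j)) -(leq_pmul2r (fact_gt0 k)).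
have -> : 'C(n, j) * n ^ (k - j) * j`! * k`! = n ^_ j * n ^ (k - j) * k`!.
  by rewrite -bin_ffact; ring.
have -> : 2 ^ k * 'C(N, k) * k ^ (k - j) * j`! * k`! =
          2 ^ k * N ^_ k * (j`! * k ^ (k - j)).
  by rewrite -bin_ffact; ring.
apply: (@leq_trans (n ^ k * k`!)).
  rewrite leq_mul // -{2}(subnKC jk) expnD leq_mul // ffact_le_exp //.
apply: (@leq_trans (2 ^ k * (N - k).+1 ^ k * k`!)).
  by rewrite -expnMn leq_mul // expn_leq.
apply: leq_mul; first by rewrite leq_mul // ffact_ge.
by move: (fact_le j (k - j)); rewrite subnKC.
Qed.

Lemma Bk_eq n r (U : {set 'I_n}) (k : nat) (F : pred {perm half n r}) G :
  (forall p, p \in pairings n r -> F p = (eout p U == k) && G #|bdry p U|) ->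
  [set p in pairings n r | F p] = Bk r U k G.
Proof.
move=> HF; apply/setP => p; have [pP|pP] := boolP (p \in pairings n r).
  by have pP' := pP; rewrite inE in pP'; rewrite !inE pP' /= HF // eout_Z // bdry_Z.
by have pP' := pP; rewrite inE in pP'; move/negbTE: pP' => pP'; rewrite !inE pP'.
Qed.

Lemma card_part n r (U : {set 'I_n}) (F : nat -> pred nat) :
  #|[set p in pairings n r | F (eout p U) #|bdry p U|]| =
  \sum_(k < (#|U| * r).+1) #|Bk r U k (F k)|.
Proof.
rewrite -sum1_card (partition_big (fun p => (inord (eout p U) : 'I_(#|U| * r).+1)) predT) //.
apply: eq_bigr => k _; rewrite sum1dep_card; apply: eq_card => p.
have [pP|pP] := boolP (p \in pairings n r); last first.
  by have pP' := pP; rewrite inE in pP'; move/negbTE: pP' => pP'; rewrite !inE pP'.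
have pP' := pP; rewrite inE in pP'; rewrite !inE pP' /=.
rewrite -(inj_eq val_inj) /= inordK ?ltnS ?eout_le //.
rewrite eout_Z // bdry_Z //.
case: (boolP (#|Zs p U| == k)) => [/eqP ->|]; by rewrite ?andbF ?andbT.
Qed.

Local Open Scope ring_scope.

Lemma term_bound {R : realType} (n m r k j : nat) (eta : R) :
  (0 < m)%N -> (4 * r * m < n)%N -> (3 <= r)%N -> (k <= m * r)%N -> (j <= k)%N ->
  0 < eta -> eta * m%:R <= k%:R - j%:R ->
  (('C(n, j) * 2 ^ (j * r))%:R : R) <=
  (2 ^ (k * r + k) * 'C((n - m) * r, k))%:R *
   expR (r%:R * m%:R * ln r%:R - eta * m%:R * ln (n%:R / m%:R)).
Proof.
move=> m0 nm r3 km jk eta0 Hd.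
set N := ((n - m) * r)%N.
have kN : (k <= N)%N by rewrite /N; nia.
have nN : (n <= 2 * (N - k).+1)%N by rewrite /N; nia.
have A := keyA jk kN nN.
have n0 : (0 < n)%N by lia.
set d := (k - j)%N.
have dR : d%:R = k%:R - j%:R :> R by rewrite natrB.
set x : R := (r * m)%:R / n%:R.
have x0 : 0 < x by rewrite divr_gt0 // ltr0n; nia.
have x1 : x <= 1 by rewrite ler_pdivrMr ?ltr0n // mul1r ler_nat; nia.
have S1 : ('C(n, j)%:R : R) <= (2 ^ k * 'C(N, k))%:R * x ^+ d.
  have A' : ('C(n, j)%:R : R) * n%:R ^+ d <= (2 ^ k * 'C(N, k))%:R * k%:R ^+ d.
    by rewrite -!natrX -!natrM ler_nat.
  have nd : 0 < (n%:R : R) ^+ d by rewrite exprn_gt0 // ltr0n.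
  rewrite -(ler_pM2r nd); apply: (le_trans A'); rewrite -mulrA ler_pM2l; last first.
    by rewrite ltr0n muln_gt0 expn_gt0 /= bin_gt0.
  rewrite -ler_pdivrMr // -expr_div_n; apply: lerXn2r; rewrite ?nnegrE //.
    by rewrite divr_ge0.
    exact: ltW.
  by rewrite /x ler_pM2r ?invr_gt0 ?ltr0n // ler_nat mulnC.
have rR : (1 <= (r%:R : R)) by rewrite ler1n; lia.
have mR : (0 < (m%:R : R)) by rewrite ltr0n.
have nR : (0 < (n%:R : R)) by rewrite ltr0n.
have lnx : ln x = ln r%:R - ln (n%:R / m%:R).
  rewrite /x natrM ln_div ?posrE ?mulr_gt0 //; last by lra.
  rewrite lnM ?posrE //; last by lra.
  rewrite ln_div ?posrE //; ring.
have lx0 : ln x <= 0 by apply: ln_le0.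
have lr0 : 0 <= ln (r%:R : R) by apply: ln_ge0.
have xd : x ^+ d = expR (d%:R * ln x).
  by rewrite -{1}(lnK (x0 : x \in Num.pos)) -expRM_natl.
have etar : eta <= r%:R.
  have : eta * m%:R <= r%:R * m%:R.
    apply: (le_trans Hd); rewrite -natrM; apply: (@le_trans _ _ k%:R).
      by rewrite lerBlDr lerDl ler0n.
    by rewrite ler_nat mulnC.
  by rewrite ler_pM2r.
have E1 : x ^+ d <= expR (r%:R * m%:R * ln r%:R - eta * m%:R * ln (n%:R / m%:R)).
  rewrite xd ler_expR.
  have H1 : d%:R * ln x <= eta * m%:R * ln x.
    by rewrite dR; apply: ler_wnM2r.
  apply: (le_trans H1); rewrite lnx mulrBr lerD2r.
  by apply: ler_wpM2r => //; apply: ler_wpM2r => //; exact: ltW.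
have E2 : (2 ^ (j * r) <= 2 ^ (k * r))%N by rewrite leq_pexp2l // leq_mul2r jk orbT.
rewrite natrM; apply: (@le_trans _ _ ((2 ^ k * 'C(N, k))%:R * x ^+ d * (2 ^ (k * r))%:R)).
  apply: ler_pM => //; by rewrite ler_nat.
rewrite expnD -mulnA !natrM.
have E : forall a b c p : R, a * b * c * p = p * (a * b) * c by move=> *; ring.
rewrite E; apply: ler_wpM2l => //.
by rewrite -!natrM ler0n.
Qed.

Definition Dlt {R : realType} (r : nat) : R := (r * (r + 2))%:R * ln 2 + r%:R * ln r%:R.

Lemma Dlt_gt0 {R : realType} r : (3 <= r)%N -> 0 < Dlt (R:=R) r.
Proof.
move=> r3; rewrite /Dlt; apply: ltr_wpDr.
  by rewrite mulr_ge0 // ln_ge0 // ler1n; lia.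
by rewrite mulr_gt0 ?ltr0n ?ln_gt0 //; [nia | rewrite ltr1n].
Qed.

Lemma pow2E {R : realType} (M : nat) : ((2 ^ M)%:R : R) = expR (M%:R * ln 2).
Proof.
rewrite natrX expRM_natl lnK // posrE ltr0n //.
Qed.

Lemma KR {R : realType} (n m r k : nat) (eta : R) (G : pred nat) :
  (0 < m)%N -> (4 * r * m < n)%N -> (3 <= r)%N -> (k <= m * r)%N -> 0 < eta ->
  (forall j, G j -> (j <= k)%N -> eta * m%:R <= k%:R - j%:R) ->
  ((\sum_(j < k.+1 | G j) 'C(n, j) * 2 ^ (j * r))%:R : R) <=
  expR (- (eta * m%:R * ln (n%:R / m%:R)) + Dlt r * m%:R) * 'C((n - m) * r, k)%:R.
Proof.
move=> m0 nm r3 km eta0 HG.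
set a := r%:R * m%:R * ln r%:R - eta * m%:R * ln (n%:R / m%:R).
set T := (2 ^ (k * r + k) * 'C((n - m) * r, k))%:R * expR a.
rewrite natr_sum.
apply: (@le_trans _ _ (\sum_(j < k.+1) T)).
  rewrite [X in X <= _]big_mkcond /=; apply: ler_sum => j _.
  case: ifP => Gj; last by rewrite /T mulr_ge0 // expR_ge0.
  by apply: term_bound => //; [rewrite -ltnS | apply: HG => //; rewrite -ltnS].
rewrite sumr_const card_ord /T -mulrnAl -mulr_natr -natrM.
have H : (k.+1 * 2 ^ (k * r + k) <= 2 ^ (m * r * (r + 2)))%N.
  apply: (@leq_trans (2 ^ k * 2 ^ (k * r + k))).
    by rewrite leq_mul2r ltn_expl // orbT.
  rewrite -expnD leq_pexp2l //; nia.
apply: (@le_trans _ _ ((2 ^ (m * r * (r + 2)) * 'C((n - m) * r, k))%:R * expR a)).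
  rewrite ler_wpM2r ?expR_ge0 // ler_nat mulnAC leq_mul2r; apply/orP; right.
  by rewrite mulnC.
rewrite natrM pow2E mulrAC -expRD mulrC [X in _ <= X]mulrC.
apply: ler_wpM2l => //; rewrite ler_expR /a /Dlt !natrM le_eqVlt; apply/orP; left; apply/eqP.
rewrite natrD; ring.
Qed.


Lemma perk {R : realType} (n m r k : nat) (U : {set 'I_n}) (eta : R) (G : pred nat) :
  #|U| = m ->
  (0 < m)%N -> (4 * r * m < n)%N -> (3 <= r)%N -> (k <= m * r)%N -> 0 < eta ->
  (forall j, G j -> (j <= k)%N -> eta * m%:R <= k%:R - j%:R) ->
  (#|Bk r U k G|%:R : R) <=
  expR (- (eta * m%:R * ln (n%:R / m%:R)) + Dlt r * m%:R) * #|Bk r U k predT|%:R.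
Proof.
move=> Um m0 nm r3 km eta0 HG.
have [c Hc] := core r U k.
rewrite !Hc !natrM card_All Um mulrCA ler_wpM2l //.
apply: (le_trans _ (KR m0 nm r3 km eta0 HG)).
by rewrite ler_nat card_Bad.
Qed.

Lemma ratio_le1 {R : realType} (a b : nat) : (a <= b)%N -> (a%:R / b%:R : R) <= 1.
Proof.
move=> ab; case: (posnP b) => [->|b0]; first by rewrite invr0 mulr0.
by rewrite ler_pdivrMr ?ltr0n // mul1r ler_nat.
Qed.



Lemma ratio_le (R : realType) (a b : nat) (B : R) :
  a%:R <= B * b%:R -> 0 <= B -> (a%:R / b%:R : R) <= B.
Proof.
move=> H B0; case: (posnP b) => [->|b0]; first by rewrite invr0 mulr0.
by rewrite ler_pdivrMr ?ltr0n.
Qed.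

Unset Implicit Arguments.

Theorem lemma4 (R : realType) (r : nat) (hr : (3 <= r)%N) :
  exists Delta2 : R, 0 < Delta2 /\
  forall eta : R, 0 < eta ->
  exists eps5 : R, 0 < eps5 /\
  exists N : nat, forall n : nat, (N <= n)%N -> ~~ odd (r * n) ->
  forall (m : nat), m%:R < eps5 * n%:R ->
  forall (U : {set 'I_n}), #|U| = m ->
  forall u : R, eta < u -> u <= r%:R ->
  0 < @prob R n r (fun p => (eout p U)%:R == u * m%:R :> R) ->
  let bound := expR (- (eta * m%:R * ln (n%:R / m%:R)) + Delta2 * m%:R) in
  @cprob R n r (fun p => #|bdry p U|%:R <= (u - eta) * m%:R)
          (fun p => (eout p U)%:R == u * m%:R :> R) <= bound /\
  @prob R n r (fun p => (eout p U)%:R - #|bdry p U|%:R > eta * m%:R) <= bound.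
Proof.
exists (Dlt r); split; first exact: Dlt_gt0.
move=> eta eta0.
exists ((4 * r)%:R^-1); split; first by rewrite invr_gt0 ltr0n; lia.
exists 0%N => n _ _ m hm U Um u etau ur _ bound.
have nm : (4 * r * m < n)%N.
  move: hm; rewrite mulrC ltr_pdivlMr ?ltr0n; last by lia.
  by rewrite -natrM ltr_nat mulnC.
have B0 : 0 <= bound by rewrite /bound expR_ge0.
case: (posnP m) => [m0|m0].
  have -> : bound = 1 by rewrite /bound m0 !mulr0 mul0r oppr0 add0r expR0.
  split; rewrite ?/cprob ?/prob; apply: ratio_le1; apply: subset_leq_card;
    apply/subsetP => p; rewrite !inE.
    by move/and3P=> [a _ c]; rewrite a c.
  by move/andP=> [a _].
split.
- rewrite /cprob.
  have [Y0|[p0 p0Y]] := set_0Vmem [set p in pairings n r | (eout p U)%:R == u * m%:R :> R].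
    rewrite Y0 cards0 invr0 mulr0 //.
  set k := eout p0 U.
  have kR : k%:R = u * m%:R :> R by move: p0Y; rewrite inE => /andP [_ /eqP].
  have km : (k <= m * r)%N by rewrite -Um eout_le.
  rewrite (@Bk_eq n r U k (fun p => (eout p U)%:R == u * m%:R :> R) predT); last first.
    by move=> p _ /=; rewrite -kR eqr_nat andbT.
  rewrite (@Bk_eq n r U k (fun p => (#|bdry p U|%:R <= (u - eta) * m%:R) &&
        ((eout p U)%:R == u * m%:R :> R)) (fun j => j%:R <= (u - eta) * m%:R)); last first.
    by move=> p _ /=; rewrite -kR eqr_nat andbC.
  apply: ratio_le => //; apply: perk => // j Gj _.
  rewrite kR; move: Gj; lra.
- rewrite /prob.
  have H := @card_part n r U (fun k j => eta * m%:R < k%:R - j%:R :> R).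
  cbv beta in H; rewrite H; clear H.
  have H := @card_part n r U (fun _ _ => true).
  cbv beta in H.
  have -> : #|pairings n r| = #|[set p in pairings n r | true]|.
    by apply: eq_card => p; rewrite inE andbT.
  rewrite H; clear H.
  apply: ratio_le => //.
  rewrite !natr_sum mulr_sumr; apply: ler_sum => k _.
  apply: perk => //; first by rewrite -Um -ltnS.
  by move=> j Gj _; apply: ltW.
Qed.
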